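(* Let $\kappa>0$, $-1<\sigma\le 0$, $\Delta t>0$, and initial data $a^0<b^0$ and $u^0$ with $V:=\int_{a^0}^{b^0}u^0\,dx>0$. Let $T>0$ satisfy $T<\frac{b^0-a^0}{2(1+\sigma)}$. Let $(a^n,b^n,u^n,\lambda^n)$ be generated by either the first order scheme or the second order scheme described in the context (with arbitrary real values of the one-sided derivative approximations, and assuming the elliptic problems involved admit solutions). Then for every integer $n\ge0$ with $(n+1)\Delta t\le T$: (i) $a^0+\sigma T\le a^{n+1}\le a^0+(1+\sigma)T$ and $b^0-(1+\sigma)T\le b^{n+1}\le b^0-\sigma T$; (ii) $0\le \lambda^{n+1}\le \dfrac{\kappa V+2}{b^0-a^0-2(1+\sigma)T}$; (iii) $\displaystyle\int_{a^{n+1}}^{b^{n+1}}\Big(\sqrt{1+(\partial_x u^{n+1})^2}+\kappa (u^{n+1})^2\Big)dx\le \frac{\kappa V^2+2V}{b^0-a^0-2(1+\sigma)T}+b^0-a^0-2\sigma T$. In particular $\lambda^{n+1}$ and the integral in (iii) are bounded by a constant depending only on $a^0,b^0,T,V,\kappa,\sigma$.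
   Context: Elliptic step: given $a<b$, $(u,\lambda)$ with $u\in C^2((a,b))\cap C^1([a,b])$ is said to solve the quasi-static problem on $(a,b)$ with volume $V$ if $$\partial_x\Big(\frac{\partial_x u}{\sqrt{1+(\partial_x u)^2}}\Big)-\kappa u+\lambda=0 \text{ on }(a,b),\quad u(a)=u(b)=0,\quad \int_a^b u\,dx=V.$$ First order scheme: given $a^n,b^n,u^n$ and real numbers $d_0^n,d_N^n$ (approximations of $\partial_x u^n$ at $a^n$ and $b^n$), set $$\frac{a^{n+1}-a^n}{\Delta t}=\sigma+\frac{1}{\sqrt{1+(d_0^n)^2}},\qquad \frac{b^{n+1}-b^n}{\Delta t}=-\sigma-\frac{1}{\sqrt{1+(d_N^n)^2}},$$ and let $(u^{n+1},\lambda^{n+1})$ solve the quasi-static problem on $(a^{n+1},b^{n+1})$ with volume $V$. Second order scheme: first perform the first order step to get a predictor $(\tilde a^{n+1},\tilde b^{n+1},\tilde u^{n+1})$; with real numbers $\tilde d_0^{n+1},\tilde d_N^{n+1}$ (approximations of $\partial_x\tilde u^{n+1}$ at $\tilde a^{n+1},\tilde b^{n+1}$) set $$\frac{a^{n+1}-a^n}{\Delta t}=\sigma+\frac12\Big(\frac{1}{\sqrt{1+(d_0^n)^2}}+\frac{1}{\sqrt{1+(\tilde d_0^{n+1})^2}}\Big),\quad \frac{b^{n+1}-b^n}{\Delta t}=-\sigma-\frac12\Big(\frac{1}{\sqrt{1+(d_N^n)^2}}+\frac{1}{\sqrt{1+(\tilde d_N^{n+1})^2}}\Big),$$ and let $(u^{n+1},\lambda^{n+1})$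 solve the quasi-static problem on $(a^{n+1},b^{n+1})$ with volume $V$. *)

(* Defs.v *)
From Stdlib Require Import Reals Lra.
Open Scope R_scope.

Definition cont_on_closed (f : R -> R) (a b : R) : Prop :=
  forall x, a <= x <= b -> limit1_in f (fun y => a <= y <= b) (f x) x.

Definition cont_on_open (f : R -> R) (a b : R) : Prop :=
  forall x, a < x < b -> continuity_pt f x.

Definition integral_eq (f : R -> R) (a b I : R) : Prop :=
  exists pr : Riemann_integrable f a b, RiemannInt pr = I.

Definition integral_le (f : R -> R) (a b C : R) : Prop :=
  exists pr : Riemann_integrable f a b, RiemannInt pr <= C.

(* (u, lambda) solves the quasi-static problem on (a,b) with volume V;
   du is the derivative d_x u of u on [a,b] (continuous on [a,b]), so that
   u is C^1([a,b]) and C^2((a,b)). *)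
Definition quasi_static (kappa a b V lam : R) (u du : R -> R) : Prop :=
  a < b /\
  cont_on_closed u a b /\
  cont_on_closed du a b /\
  (forall x, a < x < b -> derivable_pt_lim u x (du x)) /\
  (exists d2u : R -> R,
      (forall x, a < x < b -> derivable_pt_lim du x (d2u x)) /\
      cont_on_open d2u a b) /\
  (forall x, a < x < b ->
      derivable_pt_lim (fun y => du y / sqrt (1 + (du y) ^ 2)) x
                       (kappa * u x - lam)) /\
  u a = 0 /\ u b = 0 /\
  integral_eq u a b V.

(* First order scheme, for all steps n with (n+1) dt <= T.
   d0, dN are arbitrary real approximations of d_x u^n at a^n, b^n. *)
Definition first_order_scheme (kappa sigma dt T V : R)
  (a b lam d0 dN : nat -> R) (u du : nat -> R -> R) : Prop :=
  forall n : nat, INR (S n) * dt <= T ->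
    (a (S n) - a n) / dt = sigma + 1 / sqrt (1 + (d0 n) ^ 2) /\
    (b (S n) - b n) / dt = - sigma - 1 / sqrt (1 + (dN n) ^ 2) /\
    quasi_static kappa (a (S n)) (b (S n)) V (lam (S n)) (u (S n)) (du (S n)).

(* Second order scheme (predictor ta, tb, tu, tlam; td0, tdN arbitrary real
   approximations of d_x tu^{n+1} at ta^{n+1}, tb^{n+1}). *)
Definition second_order_scheme (kappa sigma dt T V : R)
  (a b lam d0 dN : nat -> R) (u du : nat -> R -> R)
  (ta tb tlam td0 tdN : nat -> R) (tu tdu : nat -> R -> R) : Prop :=
  forall n : nat, INR (S n) * dt <= T ->
    (ta (S n) - a n) / dt = sigma + 1 / sqrt (1 + (d0 n) ^ 2) /\
    (tb (S n) - b n) / dt = - sigma - 1 / sqrt (1 + (dN n) ^ 2) /\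
    quasi_static kappa (ta (S n)) (tb (S n)) V (tlam (S n)) (tu (S n)) (tdu (S n)) /\
    (a (S n) - a n) / dt =
      sigma + / 2 * (1 / sqrt (1 + (d0 n) ^ 2) + 1 / sqrt (1 + (td0 (S n)) ^ 2)) /\
    (b (S n) - b n) / dt =
      - sigma - / 2 * (1 / sqrt (1 + (dN n) ^ 2) + 1 / sqrt (1 + (tdN (S n)) ^ 2)) /\
    quasi_static kappa (a (S n)) (b (S n)) V (lam (S n)) (u (S n)) (du (S n)).

(* Main.v *)
Require Import Defs.
From Stdlib Require Import Reals Lra Psatz.
From Coquelicot Require Import Coquelicot.
Open Scope R_scope.

Definition clamp (a b x : R) := Rmax a (Rmin b x).

Lemma clamp_lip a b x y : a <= b -> Rabs (clamp a b y - clamp a b x) <= Rabs (y - x).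
Proof. intros; unfold clamp, Rmax, Rmin; repeat destruct Rle_dec; split_Rabs; lra. Qed.

Lemma clamp_in a b x : a <= b -> a <= clamp a b x <= b.
Proof. intros; unfold clamp, Rmax, Rmin; repeat destruct Rle_dec; lra. Qed.

Lemma clamp_id a b x : a <= x <= b -> clamp a b x = x.
Proof. intros; unfold clamp, Rmax, Rmin; repeat destruct Rle_dec; lra. Qed.

Lemma cont_clamp f a b : a <= b -> cont_on_closed f a b ->
  forall x, continuity_pt (fun y => f (clamp a b y)) x.
Proof.
  intros Hab H x eps Heps.
  destruct (H (clamp a b x) (clamp_in a b x Hab) eps Heps) as [alp [Halp Hf]].
  exists alp; split; auto.
  intros y [_ Hy]. simpl in *. unfold R_dist in *. apply Hf. split.
  - apply clamp_in; auto.
  - simpl. unfold R_dist. eapply Rle_lt_trans; [apply clamp_lip; auto | exact Hy].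
Qed.

Lemma ftc (G g : R -> R) a b : a < b -> (forall x, continuity_pt G x) ->
  (forall x, continuity_pt g x) ->
  (forall x, a < x < b -> derivable_pt_lim G x (g x)) -> is_RInt g a b (G b - G a).
Proof.
  intros Hab HG Hg HD.
  assert (Hex : forall x y, ex_RInt g x y).
  { intros x y; apply (@ex_RInt_continuous R_CompleteNormedModule); intros; apply continuity_pt_filterlim; auto. }
  assert (der : forall x, derivable_pt_lim (RInt g a) x (g x)).
  { intro x; apply is_derive_Reals. apply (is_derive_RInt g (RInt g a) a).
    - apply filter_forall; intro; apply (@RInt_correct R_CompleteNormedModule), Hex.
    - apply continuity_pt_filterlim; auto. }
  assert (P1 : forall x, a < x < b -> is_derive (fun x0 : R => G x0 - RInt g a x0) x 0).
  { intros x Hx. apply is_derive_Reals.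
    replace 0 with (g x - g x) by ring. apply derivable_pt_lim_minus; auto. }
  assert (P2 : forall x, a <= x <= b -> continuity_pt (fun x0 : R => G x0 - RInt g a x0) x).
  { intros x _. apply continuity_pt_minus; auto.
    apply derivable_continuous_pt. exists (g x). apply der. }
  assert (Hm := MVT_gen (fun x => G x - RInt g a x) a b (fun _ => 0)).
  cbv zeta in Hm. rewrite Rmin_left, Rmax_right in Hm by lra.
  destruct (Hm P1 P2) as [c [_ Hc]].
  assert (E : RInt g a a = 0) by (apply (@RInt_point R_CompleteNormedModule)).
  replace (G b - G a) with (RInt g a b) by lra. apply (@RInt_correct R_CompleteNormedModule), Hex.
Qed.

Section Cont.
Lemma cp_plus f g : (forall x, continuity_pt f x) -> (forall x, continuity_pt g x) ->
  forall x, continuity_pt (fun y => f y + g y) x.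
Proof. intros; apply continuity_pt_plus; auto. Qed.
Lemma cp_minus f g : (forall x, continuity_pt f x) -> (forall x, continuity_pt g x) ->
  forall x, continuity_pt (fun y => f y - g y) x.
Proof. intros; apply continuity_pt_minus; auto. Qed.
Lemma cp_mult f g : (forall x, continuity_pt f x) -> (forall x, continuity_pt g x) ->
  forall x, continuity_pt (fun y => f y * g y) x.
Proof. intros; apply continuity_pt_mult; auto. Qed.
Lemma cp_const c : forall x, continuity_pt (fun _ => c) x.
Proof. intros; apply continuity_pt_const; intros ? ?; reflexivity. Qed.
Lemma cp_div f g : (forall x, continuity_pt f x) -> (forall x, continuity_pt g x) ->
  (forall x, g x <> 0) -> forall x, continuity_pt (fun y => f y / g y) x.
Proof. intros; apply continuity_pt_div; auto. Qed.
Lemma cp_sq f : (forall x, continuity_pt f x) -> forall x, continuity_pt (fun y => f y ^ 2) x.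
Proof.
  intros H x. apply continuity_pt_locally_ext with (f := fun y => f y * f y) (a := 1).
  lra. intros; simpl; ring. apply cp_mult; auto.
Qed.
Lemma cp_sqrt1 f : (forall x, continuity_pt f x) -> forall x, continuity_pt (fun y => sqrt (1 + f y ^ 2)) x.
Proof.
  intros H x. apply (continuity_pt_comp (fun y => 1 + f y ^ 2) sqrt x).
  - apply cp_plus; [apply cp_const | apply cp_sq; auto].
  - apply continuity_pt_sqrt. pose proof (pow2_ge_0 (f x)); lra.
Qed.
End Cont.

Lemma sq_facts x : 0 < sqrt (1 + x ^ 2) /\ sqrt (1 + x ^ 2) * sqrt (1 + x ^ 2) = 1 + x ^ 2.
Proof.
  pose proof (pow2_ge_0 x). split.
  - apply sqrt_lt_R0; lra.
  - apply sqrt_sqrt; lra.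
Qed.

Lemma w_bound x : -1 <= x / sqrt (1 + x ^ 2) <= 1.
Proof.
  destruct (sq_facts x) as [H1 H2]. set (s := sqrt (1 + x ^ 2)) in *.
  set (q := x / s). assert (x = q * s) by (unfold q; field; lra).
  assert (E : q * q * (s * s) = x ^ 2) by (rewrite H; ring).
  assert (q * q <= 1).
  { apply Rmult_le_reg_r with (s * s). nra. pose proof (pow2_ge_0 x). nra. }
  split; nra.
Qed.

Lemma inv_bound x : 0 < 1 / sqrt (1 + x ^ 2) <= 1.
Proof.
  destruct (sq_facts x) as [H1 H2]. set (s := sqrt (1 + x ^ 2)) in *.
  assert (1 <= s) by (pose proof (pow2_ge_0 x); nra).
  split. apply Rdiv_lt_0_compat; lra.
  unfold Rdiv; rewrite Rmult_1_l. rewrite <- Rinv_1. apply Rinv_le_contravar; lra.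
Qed.

Lemma fc_eq s k v d : 0 < s -> s * s = 1 + d ^ 2 ->
  1 / s + (k * v ^ 2 + d / s * d) = s + k * v ^ 2.
Proof. intros H1 H2. apply Rmult_eq_reg_r with s; [|lra]. field_simplify; [|lra]. nra. Qed.

Lemma qs_bounds kappa A B V lam u du : 0 < kappa -> 0 < V ->
  quasi_static kappa A B V lam u du ->
  0 <= lam /\ lam * (B - A) <= kappa * V + 2 /\
  integral_le (fun x => sqrt (1 + (du x) ^ 2) + kappa * (u x) ^ 2) A B ((B - A) + lam * V).
Proof.
  intros Hk HV [HAB [Hu [Hdu [Hder [_ [Hw [HuA [HuB HI]]]]]]]].
  assert (HAB' : A <= B) by lra.
  assert (Hid : forall y, A < y < B -> clamp A B y = y) by (intros; apply clamp_id; lra).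
  set (uc := fun y => u (clamp A B y)).
  set (dc := fun y => du (clamp A B y)).
  assert (Cu : forall x, continuity_pt uc x) by (apply cont_clamp; auto).
  assert (Cd : forall x, continuity_pt dc x) by (apply cont_clamp; auto).
  set (s := fun y => sqrt (1 + dc y ^ 2)).
  assert (Cs : forall x, continuity_pt s x) by (apply cp_sqrt1; auto).
  assert (Hs : forall y, 0 < s y /\ s y * s y = 1 + dc y ^ 2) by (intro; apply sq_facts).
  set (w := fun y => dc y / s y).
  assert (Cw : forall x, continuity_pt w x).
  { apply cp_div; auto. intro y; destruct (Hs y); lra. }
  assert (D1 : forall x, A < x < B -> derivable_pt_lim w x (kappa * uc x - lam)).
  { intros x Hx. unfold uc; rewrite Hid by auto.
    apply derivable_pt_lim_locally_ext with (f := fun y => du y / sqrt (1 + du y ^ 2)) (a := A) (b := B); auto.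
    intros z Hz; unfold w, s, dc; rewrite Hid; auto. }
  assert (Du : forall x, A < x < B -> derivable_pt_lim uc x (dc x)).
  { intros x Hx. unfold dc; rewrite Hid by auto.
    apply derivable_pt_lim_locally_ext with (f := u) (a := A) (b := B); auto.
    intros z Hz; unfold uc; rewrite Hid; auto. }
  assert (I1 := ftc w (fun y => kappa * uc y - lam) A B HAB Cw
                  (cp_minus _ _ (cp_mult _ _ (cp_const kappa) Cu) (cp_const lam)) D1).
  assert (Iu : is_RInt uc A B V).
  { destruct HI as [pr Hpr].
    assert (Hex := ex_RInt_Reals_1 _ _ _ pr).
    apply is_RInt_ext with (f := u).
    { rewrite Rmin_left, Rmax_right by lra. intros; unfold uc; rewrite Hid; auto. }
    rewrite <- Hpr, <- RInt_Reals. apply (@RInt_correct R_CompleteNormedModule); auto. }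
  assert (I1' : is_RInt (fun y => kappa * uc y - lam) A B (kappa * V - (B - A) * lam)).
  { exact (is_RInt_minus _ _ _ _ _ _ (is_RInt_scal _ _ _ kappa _ Iu) (is_RInt_const A B lam)). }
  assert (E1 : w B - w A = kappa * V - (B - A) * lam).
  { rewrite <- (is_RInt_unique _ _ _ _ I1), <- (is_RInt_unique _ _ _ _ I1'). reflexivity. }
  assert (WB := w_bound (dc B)). assert (WA := w_bound (dc A)).
  change (dc B / sqrt (1 + dc B ^ 2)) with (w B) in WB.
  change (dc A / sqrt (1 + dc A ^ 2)) with (w A) in WA.
  assert (Bound1 : lam * (B - A) <= kappa * V + 2) by lra.
  set (h := fun y => kappa * uc y ^ 2 + w y * dc y).
  assert (Ch : forall x, continuity_pt h x).
  { apply cp_plus. apply cp_mult. apply cp_const. apply cp_sq; auto. apply cp_mult; auto. }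
  assert (D2 : forall x, A < x < B -> derivable_pt_lim (fun y => w y * uc y) x (h x - lam * uc x)).
  { intros x Hx. replace (h x - lam * uc x) with ((kappa * uc x - lam) * uc x + w x * dc x)
      by (unfold h; ring).
    apply (derivable_pt_lim_mult w uc); auto. }
  assert (I2 := ftc (fun y => w y * uc y) (fun y => h y - lam * uc y) A B HAB
                  (cp_mult _ _ Cw Cu)
                  (cp_minus _ _ Ch (cp_mult _ _ (cp_const lam) Cu)) D2).
  assert (EuB : uc B = 0) by (unfold uc; rewrite clamp_id; auto; lra).
  assert (EuA : uc A = 0) by (unfold uc; rewrite clamp_id; auto; lra).
  simpl in I2. rewrite EuA, EuB in I2.
  assert (Exh : ex_RInt h A B).
  { apply (@ex_RInt_continuous R_CompleteNormedModule); intros; apply continuity_pt_filterlim; auto. }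
  assert (I2' : is_RInt (fun y => h y - lam * uc y) A B (RInt h A B - lam * V)).
  { exact (is_RInt_minus _ _ _ _ _ _ (@RInt_correct R_CompleteNormedModule _ _ _ Exh)
             (is_RInt_scal _ _ _ lam _ Iu)). }
  assert (E2 : RInt h A B = lam * V).
  { assert (X := is_RInt_unique _ _ _ _ I2). rewrite (is_RInt_unique _ _ _ _ I2') in X. lra. }
  assert (Hpos : 0 <= RInt h A B).
  { apply RInt_ge_0; auto. intros x _. unfold h.
    assert (w x * dc x = dc x * dc x / s x) by (unfold w; field; destruct (Hs x); lra).
    rewrite H. pose proof (pow2_ge_0 (uc x)). destruct (Hs x).
    assert (0 <= dc x * dc x / s x) by (apply Rdiv_le_0_compat; nra). nra. }
  assert (Hlam : 0 <= lam) by nra.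
  set (i := fun y => 1 / s y).
  assert (Ci : forall x, continuity_pt i x).
  { apply cp_div. apply cp_const. auto. intro y; destruct (Hs y); lra. }
  assert (Exi : ex_RInt i A B).
  { apply (@ex_RInt_continuous R_CompleteNormedModule); intros; apply continuity_pt_filterlim; auto. }
  assert (Ri : RInt i A B <= B - A).
  { replace (B - A) with (RInt (fun _ => 1) A B).
    apply RInt_le; auto. apply ex_RInt_const. intros x _. apply inv_bound.
    rewrite RInt_const. unfold scal; simpl; unfold mult; simpl; ring. }
  set (fc := fun y => s y + kappa * uc y ^ 2).
  assert (Ifc : is_RInt fc A B (RInt i A B + RInt h A B)).
  { apply is_RInt_ext with (f := fun y => plus (i y) (h y)).
    - intros x _. unfold fc, i, h, w. change (plus (1 / s x) (kappa * uc x ^ 2 + dc x / s x * dc x))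
        with (1 / s x + (kappa * uc x ^ 2 + dc x / s x * dc x)).
      destruct (Hs x). apply fc_eq; auto.
    - apply (@is_RInt_plus R_NormedModule); apply (@RInt_correct R_CompleteNormedModule); auto. }
  repeat split; auto.
  assert (Exf : ex_RInt (fun x => sqrt (1 + (du x) ^ 2) + kappa * (u x) ^ 2) A B).
  { apply ex_RInt_ext with (f := fc).
    - rewrite Rmin_left, Rmax_right by lra. intros; unfold fc, s, dc, uc; rewrite Hid; auto.
    - exists (RInt i A B + RInt h A B); auto. }
  exists (ex_RInt_Reals_0 _ _ _ Exf). rewrite <- RInt_Reals.
  rewrite (RInt_ext _ fc).
  - rewrite (is_RInt_unique _ _ _ _ Ifc). lra.
  - rewrite Rmin_left, Rmax_right by lra. intros; unfold fc, s, dc, uc; rewrite Hid; auto.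
Qed.

Lemma avg_bound x y : 0 <= / 2 * (1 / sqrt (1 + x ^ 2) + 1 / sqrt (1 + y ^ 2)) <= 1.
Proof. pose proof (inv_bound x); pose proof (inv_bound y); lra. Qed.

Lemma divK x y dt : dt <> 0 -> x = y + dt * ((x - y) / dt).
Proof. intros; field; auto. Qed.

Lemma step_lemma (kappa sigma dt T V : R)
  (a b lam d0 dN : nat -> R) (u du : nat -> R -> R)
  (ta tb tlam td0 tdN : nat -> R) (tu tdu : nat -> R -> R) :
  0 < dt ->
  (first_order_scheme kappa sigma dt T V a b lam d0 dN u du \/
   second_order_scheme kappa sigma dt T V a b lam d0 dN u du
                                 ta tb tlam td0 tdN tu tdu) ->
  forall n, INR (S n) * dt <= T ->
  exists c0 c1, 0 <= c0 <= 1 /\ 0 <= c1 <= 1 /\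
    a (S n) = a n + dt * (sigma + c0) /\ b (S n) = b n - dt * (sigma + c1) /\
    quasi_static kappa (a (S n)) (b (S n)) V (lam (S n)) (u (S n)) (du (S n)).
Proof.
  intros Hdt [H | H] n Hn; specialize (H n Hn); assert (Hd0 : dt <> 0) by lra.
  - destruct H as [HsA [HsB Hq]].
    exists (1 / sqrt (1 + (d0 n) ^ 2)), (1 / sqrt (1 + (dN n) ^ 2)).
    pose proof (inv_bound (d0 n)); pose proof (inv_bound (dN n)).
    split; [lra|]. split; [lra|]. split; [|split; [|exact Hq]].
    + rewrite (divK (a (S n)) (a n) dt Hd0) at 1. rewrite HsA. ring.
    + rewrite (divK (b (S n)) (b n) dt Hd0) at 1. rewrite HsB. ring.
  - destruct H as [_ [_ [_ [HsA [HsB Hq]]]]].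
    exists (/ 2 * (1 / sqrt (1 + d0 n ^ 2) + 1 / sqrt (1 + td0 (S n) ^ 2))), (/ 2 * (1 / sqrt (1 + dN n ^ 2) + 1 / sqrt (1 + tdN (S n) ^ 2))).
    split; [apply avg_bound|]. split; [apply avg_bound|].
    split; [|split; [|exact Hq]].
    + rewrite (divK (a (S n)) (a n) dt Hd0) at 1. rewrite HsA. ring.
    + rewrite (divK (b (S n)) (b n) dt Hd0) at 1. rewrite HsB. ring.
Qed.

Theorem proposition3p1
  (kappa sigma dt T V : R)
  (a b lam d0 dN : nat -> R) (u du : nat -> R -> R)
  (ta tb tlam td0 tdN : nat -> R) (tu tdu : nat -> R -> R)
  (Hkappa : 0 < kappa) (Hsig1 : -1 < sigma) (Hsig2 : sigma <= 0)
  (Hdt : 0 < dt) (Hab0 : a 0%nat < b 0%nat)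
  (HV : integral_eq (u 0%nat) (a 0%nat) (b 0%nat) V) (HVpos : 0 < V)
  (HT : 0 < T) (HT2 : T < (b 0%nat - a 0%nat) / (2 * (1 + sigma)))
  (Hscheme : first_order_scheme kappa sigma dt T V a b lam d0 dN u du \/
             second_order_scheme kappa sigma dt T V a b lam d0 dN u du
                                 ta tb tlam td0 tdN tu tdu) :
  forall n : nat, INR (S n) * dt <= T ->
    (a 0%nat + sigma * T <= a (S n) <= a 0%nat + (1 + sigma) * T /\
     b 0%nat - (1 + sigma) * T <= b (S n) <= b 0%nat - sigma * T) /\
    (0 <= lam (S n) <=
       (kappa * V + 2) / (b 0%nat - a 0%nat - 2 * (1 + sigma) * T)) /\
    integral_le
      (fun x => sqrt (1 + (du (S n) x) ^ 2) + kappa * (u (S n) x) ^ 2)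
      (a (S n)) (b (S n))
      ((kappa * V ^ 2 + 2 * V) / (b 0%nat - a 0%nat - 2 * (1 + sigma) * T)
       + b 0%nat - a 0%nat - 2 * sigma * T).
Proof.
  assert (Hstep := step_lemma kappa sigma dt T V a b lam d0 dN u du ta tb tlam td0 tdN tu tdu Hdt Hscheme).
  assert (Pos : forall m, INR m * dt <= T ->
    a 0%nat + INR m * dt * sigma <= a m <= a 0%nat + INR m * dt * (1 + sigma) /\
    b 0%nat - INR m * dt * (1 + sigma) <= b m <= b 0%nat - INR m * dt * sigma).
  { induction m as [|k IH]; intros Hk.
    - simpl. rewrite Rmult_0_l, !Rmult_0_l. lra.
    - assert (Hk' : INR k * dt <= T) by (rewrite S_INR in Hk; lra).
      destruct (IH Hk') as [IA IB].
      destruct (Hstep k Hk) as [c0 [c1 [Hc0 [Hc1 [EA [EB _]]]]]].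
      rewrite EA, EB, S_INR.
      assert (0 <= dt * c0 <= dt) by nra. assert (0 <= dt * c1 <= dt) by nra.
      split; split; nra. }
  intros n Hn.
  assert (HD : T * (2 * (1 + sigma)) < b 0%nat - a 0%nat).
  { replace (b 0%nat - a 0%nat) with ((b 0%nat - a 0%nat) / (2 * (1 + sigma)) * (2 * (1 + sigma)))
      by (field; lra).
    apply Rmult_lt_compat_r; lra. }
  destruct (Pos (S n) Hn) as [PA PB].
  set (m := INR (S n)) in *.
  assert (Hm0 : 0 <= m * dt) by (unfold m; pose proof (pos_INR (S n)); nra).
  assert (PA' : a 0%nat + sigma * T <= a (S n) <= a 0%nat + (1 + sigma) * T) by (split; nra).
  assert (PB' : b 0%nat - (1 + sigma) * T <= b (S n) <= b 0%nat - sigma * T) by (split; nra).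
  destruct (Hstep n Hn) as [c0 [c1 [_ [_ [_ [_ Hq]]]]]].
  destruct (qs_bounds _ _ _ _ _ _ _ Hkappa HVpos Hq) as [Hl0 [Hl1 [pr Hpr]]].
  set (D := b 0%nat - a 0%nat - 2 * (1 + sigma) * T) in *.
  assert (HDp : 0 < D) by (unfold D; lra).
  assert (HBA1 : D <= b (S n) - a (S n)) by (unfold D; lra).
  assert (HBA2 : b (S n) - a (S n) <= b 0%nat - a 0%nat - 2 * sigma * T) by lra.
  assert (Hlam : lam (S n) <= (kappa * V + 2) / D).
  { apply Rmult_le_reg_r with D; [lra|]. unfold Rdiv. rewrite Rmult_assoc, Rinv_l by lra. nra. }
  split; [split; auto|]. split; [split; auto|].
  exists pr.
  replace ((kappa * V ^ 2 + 2 * V) / D) with (V * ((kappa * V + 2) / D)) by (field; lra).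
  nra.
Qed.
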